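(* Let $v$ be a vertex of a finite 2-covered graph of spaces $X$ with incident oriented edges $e_i$, $i\in I$ (so $\tau(e_i)=v$), $|I|\ge1$, with edge maps $\tau_i\colon E_i\looparrowright V$. Suppose $v$ is unfoldable, $v$ is not reducible, and if $|I|=1$ then $V$ has at least one edge. Then exactly one of the following holds: (1) (degenerate) there is a distinguished index $0\in I$ such that $\tau_0\colon E_0\to V$ is not an embedding, and for $i\ne0$ the maps $\tau_i$ are embeddings with pairwise disjoint images; (2) (nondegenerate) $|I|=3$, all $\tau_i$ are embeddings, the images of any two incident edge spaces intersect, and there is a vertex of $V$ lying in the image of all three incident edge spaces.
   Context: A 2-covered graph of spaces $X$ consists of: a finite connected graph $\Gamma_U(X)$, with oriented edges $e$, reversal $\bar e$, and terminal/initial vertices $\tau(e),\iota(e)=\tau(\bar e)$; for each vertex $v$ a finite connected graph $V$; for each edge $e$ a finite connected graph $E=\bar E$ (possibly a point); and for each oriented edge $e$ a combinatorial immersion $\tau_e\colon E\looparrowright V$ where $v=\tau(e)$; such that for each vertex $v$, every edge of $V$ is the image of exactly two edges of $\bigsqcup_{\tau(e)=v}E$. For a vertex $v$ with incident oriented edges $e_i$, $i\in I$, and $J\subseteq I$, put $V_J=\bigcup_{j\in J}\tau_j(E_j)$. The vertex $v$ is unfoldable if for every $J\subseteq I$, either the map $\bigsqcup_{j\in J}E_j\to V_J$ is an isomorphism of graphs or the map $\bigsqcup_{i\in I\setminus J}E_i\to V_{I\setminus J}$ is an isomorphism of graphs. The vertex $v$ is reducible if it has exactly two incident oriented edges and both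 maps $E_i\to V$ are graph isomorphisms. *)

(* Defs.v *)
From mathcomp Require Import all_boot.
Set Implicit Arguments. Unset Strict Implicit. Unset Printing Implicit Defensive.

(* Serre-style finite graphs: vertices, oriented edges with a fixed-point-free
   reversal involution, and a terminal-vertex map; iota d := gtau (grev d). *)
Record graph := Graph {
  gV : finType;
  gD : finType;
  grev : gD -> gD;
  gtau : gD -> gV;
  grevK : involutive grev;
  grev_neq : forall d, grev d != d }.

Definition giota (G : graph) (d : gD G) : gV G := gtau (grev d).

Definition gconnected (G : graph) : Prop :=
  0 < #|gV G| /\
  forall x y : gV G,
    connect (fun a b : gV G => [exists d : gD G, (giota d == a) && (gtau d == b)]) x y.

Record gmap (G H : graph) := GMap {
  fv : gV G -> gV H;
  fd : gD G -> gD H;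
  fd_rev : forall d, fd (grev d) = grev (fd d);
  fd_tau : forall d, gtau (fd d) = fv (gtau d) }.

Definition immersion G H (f : gmap G H) : Prop :=
  forall d1 d2 : gD G, gtau d1 = gtau d2 -> fd f d1 = fd f d2 -> d1 = d2.

Definition embedding G H (f : gmap G H) : Prop := injective (fv f) /\ injective (fd f).

Definition giso G H (f : gmap G H) : Prop := bijective (fv f) /\ bijective (fd f).

Definition in_img G H (f : gmap G H) (w : gV H) : Prop := exists x, fv f x = w.

Unset Implicit Arguments.
Record two_covered := TwoCovered {
  Gam : graph;
  Gam_conn : gconnected Gam;
  VS : gV Gam -> graph;
  VS_conn : forall v, gconnected (VS v);
  ES : gD Gam -> graph;
  ES_conn : forall e, gconnected (ES e);
  ES_rev : forall e, ES (grev e) = ES e;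
  tmap : forall (v : gV Gam) (e : {e : gD Gam | gtau e == v}), gmap (ES (val e)) (VS v);
  tmap_imm : forall v e, immersion (tmap v e);
  (* every (oriented, equivalently unoriented) edge of V is the image of exactly
     two edges of the disjoint union of the incident edge spaces *)
  two_cover : forall (v : gV Gam) (d : gD (VS v)),
    #|[set p : {e : {e : gD Gam | gtau e == v} & gD (ES (val e))}
         | fd (tmap v (tag p)) (tagged p) == d]| = 2 }.
Set Implicit Arguments.
Arguments tmap {t} v e.
Arguments VS {t} _.
Arguments ES {t} _.

Section Local.
Variables (X : two_covered) (v : gV (Gam X)).

Definition inc : finType := {e : gD (Gam X) | gtau e == v}.
Definition Ei (i : inc) : graph := ES (val i).
Definition tau_ (i : inc) : gmap (Ei i) (VS v) := tmap v i.

(* the map  \bigsqcup_{j in J} E_j -> V_J  is an isomorphism of graphs, i.e.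
   (since it is onto V_J by definition) injective on vertices and on edges *)
Definition union_iso (J : {set inc}) : Prop :=
  (forall (i j : inc) (x : gV (Ei i)) (y : gV (Ei j)), i \in J -> j \in J ->
     fv (tau_ i) x = fv (tau_ j) y -> existT (fun k => gV (Ei k)) i x = existT _ j y) /\
  (forall (i j : inc) (x : gD (Ei i)) (y : gD (Ei j)), i \in J -> j \in J ->
     fd (tau_ i) x = fd (tau_ j) y -> existT (fun k => gD (Ei k)) i x = existT _ j y).

Definition unfoldable : Prop := forall J : {set inc}, union_iso J \/ union_iso (~: J).

Definition reducible : Prop := #|inc| = 2 /\ forall i : inc, giso (tau_ i).

Definition images_meet (i j : inc) : Prop :=
  exists w, in_img (tau_ i) w /\ in_img (tau_ j) w.

Definition degenerate : Prop :=
  exists i0 : inc, ~ embedding (tau_ i0) /\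
    (forall i, i != i0 -> embedding (tau_ i)) /\
    (forall i j, i != i0 -> j != i0 -> i != j -> ~ images_meet i j).

Definition nondegenerate : Prop :=
  #|inc| = 3 /\ (forall i, embedding (tau_ i)) /\
  (forall i j, i != j -> images_meet i j) /\
  exists w, forall i, in_img (tau_ i) w.

End Local.

(* Main.v *)
Require Import Defs.
From mathcomp Require Import all_boot.
From Stdlib Require Import Classical Eqdep_dec.
Set Implicit Arguments. Unset Strict Implicit. Unset Printing Implicit Defensive.

Definition imv (X : two_covered) (v : gV (Gam X)) (i : inc v) (u : gV (VS v)) : bool :=
  [exists x, fv (tau_ i) x == u].

Definition Sv (X : two_covered) (v : gV (Gam X)) (u : gV (VS v)) : {set inc v} :=
  [set i | imv i u].

Lemma imvP (X : two_covered) (v : gV (Gam X)) (i : inc v) u :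
  reflect (exists x, fv (tau_ i) x = u) (imv i u).
Proof.
apply: (iffP existsP) => [[x /eqP]|[x Hx]]; exists x => //; exact/eqP.
Qed.

Lemma sig_injV (X : two_covered) (v : gV (Gam X)) (i : inc v) (x y : gV (Ei i)) :
  existT (fun k => gV (Ei k)) i x = existT _ i y -> x = y.
Proof. apply: inj_pair2_eq_dec => a b; exact: (decP eqP). Qed.

Lemma sig_injD (X : two_covered) (v : gV (Gam X)) (i : inc v) (x y : gD (Ei i)) :
  existT (fun k => gD (Ei k)) i x = existT _ i y -> x = y.
Proof. apply: inj_pair2_eq_dec => a b; exact: (decP eqP). Qed.

Lemma iso_emb (X : two_covered) (v : gV (Gam X)) (J : {set inc v}) i :
  union_iso J -> i \in J -> embedding (tau_ i).
Proof.
move=> [HV HD] iJ; split => x y H.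
  exact: sig_injV (HV _ _ _ _ iJ iJ H).
exact: sig_injD (HD _ _ _ _ iJ iJ H).
Qed.

Lemma iso_pair (X : two_covered) (v : gV (Gam X)) (J : {set inc v}) a b w :
  union_iso J -> a \in J -> b \in J -> a != b -> imv a w -> imv b w -> False.
Proof.
move=> [HV _] aJ bJ ab /imvP [x Hx] /imvP [y Hy].
have := HV _ _ _ _ aJ bJ (etrans Hx (esym Hy)).
move/(congr1 (@projT1 _ _)) => /= E; by rewrite E eqxx in ab.
Qed.

Lemma no_two_pairs (X : two_covered) (v : gV (Gam X)) (a b c d : inc v) w1 w2 :
  unfoldable v -> a != b -> c != d -> a != c -> a != d -> b != c -> b != d ->
  imv a w1 -> imv b w1 -> imv c w2 -> imv d w2 -> False.
Proof.
move=> unf ab cd ac ad bc bd ha hb hc hd.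
case: (unf [set a; b]) => H.
  by apply: (iso_pair H _ _ ab ha hb); rewrite !inE eqxx ?orbT.
apply: (iso_pair H _ _ cd hc hd); rewrite !inE negb_or.
  by rewrite eq_sym ac eq_sym bc.
by rewrite eq_sym ad eq_sym bd.
Qed.

Lemma cover2 (X : two_covered) (v : gV (Gam X)) :
  (forall i : inc v, embedding (tau_ i)) -> forall d : gD (VS v),
  exists i j, i != j /\ (exists x, fd (tau_ i) x = d) /\ (exists y, fd (tau_ j) y = d) /\
    forall k z, fd (tau_ k) z = d -> k = i \/ k = j.
Proof.
move=> emb d.
have := @two_cover X v d.
move/eqP/cards2P => [p [q [pq HA]]].
have pA : p \in [set p; q] by rewrite !inE eqxx.
have qA : q \in [set p; q] by rewrite !inE eqxx orbT.
rewrite -HA in pA qA.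
move: pq HA pA qA; case: p => i x; case: q => j y pq HA.
rewrite !inE /= => /eqP Hx /eqP Hy.
have ij : i != j.
  apply/negP => /eqP E; subst j.
  have : x = y by apply: (proj2 (emb i)); rewrite Hx Hy.
  by move=> E; subst y; rewrite eqxx in pq.
exists i, j; split => //; split; first by exists x.
split; first by exists y.
move=> k z Hz.
have : existT (fun e : inc v => gD (Ei e)) k z \in [set existT (fun e : inc v => gD (Ei e)) i x; existT _ j y].
  by rewrite -HA inE /=; apply/eqP.
rewrite !inE => /orP [] /eqP /(congr1 (@projT1 _ _)) /= ->; by [left|right].
Qed.

Lemma edge_im (X : two_covered) (v : gV (Gam X)) (i : inc v) x :
  imv i (gtau (fd (tau_ i) x)) /\ imv i (giota (fd (tau_ i) x)).
Proof.
split; apply/imvP.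
  by exists (gtau x); rewrite fd_tau.
by exists (gtau (grev x)); rewrite /giota -fd_rev fd_tau.
Qed.

Lemma vertex_edge (G : graph) : gconnected G -> 0 < #|gD G| ->
  forall u : gV G, exists d : gD G, gtau d = u.
Proof.
move=> [_ Hc] /card_gt0P [d0 _] u.
move: (Hc u (gtau d0)) => /connectP [p Hp Hl].
case: p Hp Hl => [|z p] /=.
  by move=> _ E; exists d0.
move=> /andP [/existsP [d /andP [/eqP Hi _]] _] _.
by exists (grev d); rewrite -Hi.
Qed.

Lemma noedge_single (G : graph) : gconnected G -> ~ 0 < #|gD G| ->
  forall x y : gV G, x = y.
Proof.
move=> [_ Hc] hE x y.
move: (Hc x y) => /connectP [p Hp Hl].
case: p Hp Hl => [|z p] /=; first by move=> _ E.
move=> /andP [/existsP [d _] _] _.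
by exfalso; apply: hE; apply/card_gt0P; exists d.
Qed.

Lemma second_img (X : two_covered) (v : gV (Gam X)) :
  (forall i : inc v, embedding (tau_ i)) -> 0 < #|gD (VS v)| ->
  forall u, exists i j : inc v, [/\ i != j, imv i u & imv j u].
Proof.
move=> emb hE u.
have [d Hd] := vertex_edge (@VS_conn X v) hE u.
have [i [j [ij [[x Hx] [[y Hy] _]]]]] := cover2 emb d.
exists i, j; split => //; rewrite -Hd.
  by rewrite -Hx; case: (edge_im x).
by rewrite -Hy; case: (edge_im y).
Qed.

Lemma E_nonempty (X : two_covered) (v : gV (Gam X)) (i : inc v) : exists x : gV (Ei i), true.
Proof.
have [/card_gt0P [x _] _] := @ES_conn X (val i); by exists x.
Qed.

Lemma all_in_two (T : finType) : #|T| = 2 -> forall i j k : T, i != j -> k = i \/ k = j.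
Proof.
move=> hT i j k ij.
have : [set i; j] == [set: T].
  by rewrite eqEcard subsetT cardsT hT cards2 ij.
move/eqP => E; have : k \in [set i; j] by rewrite E inE.
by rewrite !inE => /orP [] /eqP ->; [left|right].
Qed.

Lemma bij_of_inj_surj (A B : finType) (f : A -> B) :
  injective f -> (forall y, exists x, f x = y) -> bijective f.
Proof.
move=> inj sur.
have H : forall y, exists x, f x == y by move=> y; have [x Hx] := sur y; exists x; apply/eqP.
exists (fun y => xchoose (H y)).
  by move=> x; apply: inj; apply/eqP; exact: (xchooseP (H (f x))).
by move=> y; apply/eqP; exact: (xchooseP (H y)).
Qed.

Lemma pick2 (T : finType) (A : {set T}) : 1 < #|A| -> exists a b, [/\ a \in A, b \in A & a != b].
Proof.
move=> h; have /card_gt0P [a aA] : 0 < #|A| by apply: ltnW.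
have : 0 < #|A :\ a| by move: h; rewrite (cardsD1 a A) aA.
move/card_gt0P => [b]; rewrite !inE => /andP [ba bA].
by exists a, b; split => //; rewrite eq_sym.
Qed.

Lemma pick3 (T : finType) (A : {set T}) : 2 < #|A| ->
  exists a b c, [/\ a \in A, b \in A, c \in A & [/\ a != b, a != c & b != c]].
Proof.
move=> h; have /card_gt0P [a aA] : 0 < #|A| by apply: ltnW; apply: ltnW.
have : 1 < #|A :\ a| by move: h; rewrite (cardsD1 a A) aA.
move/pick2 => [b [c [bA cA bc]]]; move: bA cA; rewrite !inE.
move=> /andP [ba bA] /andP [ca cA].
by exists a, b, c; split => //; split => //; rewrite eq_sym.
Qed.

Lemma S_const (X : two_covered) (v : gV (Gam X)) :
  (forall i : inc v, embedding (tau_ i)) -> 0 < #|gD (VS v)| ->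
  (forall w : gV (VS v), #|Sv w| <= 2) -> forall x y : gV (VS v), Sv x = Sv y.
Proof.
move=> emb hE hS.
have step : forall d : gD (VS v), Sv (giota d) = Sv (gtau d).
  move=> d; have [i [j [ij [[x Hx] [[y Hy] _]]]]] := cover2 emb d.
  have sub : forall u, imv i u -> imv j u -> Sv u = [set i; j].
    move=> u hi hj; apply/eqP; rewrite eq_sym eqEcard cards2 ij hS andbT.
    by apply/subsetP => k; rewrite /Sv !inE => /orP [] /eqP ->.
  rewrite (sub (giota d)) ?(sub (gtau d)) //.
  - by rewrite -Hx; case: (edge_im x).
  - by rewrite -Hy; case: (edge_im y).
  - by rewrite -Hx; case: (edge_im x).
  - by rewrite -Hy; case: (edge_im y).
move=> x y; have [_ Hc] := @VS_conn X v; move: (Hc x y) => /connectP [p Hp ->].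
elim: p x Hp => [|z p IH] x //= /andP [/existsP [d /andP [/eqP Hi /eqP Ht]] Hp].
by rewrite -(IH z Hp) -Hi -Ht step.
Qed.

Lemma nondeg (X : two_covered) (v : gV (Gam X)) :
  0 < #|inc v| -> unfoldable v -> ~ reducible v ->
  (#|inc v| = 1 -> 0 < #|gD (VS v)|) -> (forall i : inc v, embedding (tau_ i)) -> nondegenerate v.
Proof.
move=> pos unf nred h1 emb.
case: (classic (exists w : gV (VS v), 2 < #|Sv w|)) => [[w hw]|hB].
- have [a [b [c [aS bS cS [ab ac bc]]]]] := pick3 hw.
  rewrite /Sv !inE in aS bS cS.
  have allk : forall k, k \in [set a; b; c].
    move=> k; apply/negPn/negP => kn.
    move: kn; rewrite !inE !negb_or => /andP [/andP [ka kb] kc].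
    have [x _] := E_nonempty k.
    have hk : imv k (fv (tau_ k) x) by apply/imvP; exists x.
    case: (classic (0 < #|gD (VS v)|)) => hE.
    + have [i [j [ij hi hj]]] := second_img emb hE (fv (tau_ k) x).
      have [e [ek he]] : exists e, e != k /\ imv e (fv (tau_ k) x).
        case: (eqVneq i k) => [Eik|ik]; last by exists i.
        by exists j; split=> //; rewrite -Eik eq_sym.
      have ke : k != e by rewrite eq_sym.
      case: (eqVneq e a) => [Ea|ea].
        subst e; exact: (no_two_pairs unf ke bc kb kc ab ac hk he bS cS).
      case: (eqVneq e b) => [Eb|eb].
        subst e; exact: (no_two_pairs unf ke ac ka kc ea bc hk he aS cS).
      exact: (no_two_pairs unf ke ab ka kb ea eb hk he aS bS).
    + have Eu : fv (tau_ k) x = w by apply: noedge_single (@VS_conn X v) hE _ _.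
      rewrite Eu in hk.
      have ck : c != k by rewrite eq_sym.
      have ak : a != k by rewrite eq_sym.
      have bk : b != k by rewrite eq_sym.
      exact: (no_two_pairs unf ab ck ac ak bc bk aS bS cS hk).
  have Hset : [set: inc v] = [set a; b; c] by apply/setP => k; rewrite inE allk.
  have card3 : #|inc v| = 3.
    by rewrite -cardsT Hset -setUA cardsU1 cards2 bc !inE negb_or ab ac.
  have allw : forall i, imv i w.
    by move=> i; have := allk i; rewrite !inE => /orP [/orP [] | ] /eqP ->.
  split=> //; split=> //; split.
    by move=> i j _; exists w; split; apply/imvP; exact: allw.
  by exists w => i; apply/imvP; exact: allw.
- exfalso; apply: nred.
  have hS : forall w : gV (VS v), #|Sv w| <= 2.
    by move=> w; rewrite leqNgt; apply/negP => h; apply: hB; exists w.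
  case: (classic (0 < #|gD (VS v)|)) => hE.
  + have [d0 _] : exists d0 : gD (VS v), true by move/card_gt0P: hE => [d0 _]; exists d0.
    have [i0 [j0 [ij0 [[x0 Hx0] [[y0 Hy0] _]]]]] := cover2 emb d0.
    have Su0 : Sv (gtau d0) = [set i0; j0].
      apply/eqP; rewrite eq_sym eqEcard cards2 ij0 hS andbT.
      apply/subsetP => k; rewrite /Sv !inE => /orP [] /eqP ->.
        by rewrite -Hx0; case: (edge_im x0).
      by rewrite -Hy0; case: (edge_im y0).
    have card2 : #|inc v| = 2.
      have HT : [set: inc v] = [set i0; j0].
        apply/setP => k; have [x _] := E_nonempty k.
        rewrite in_setT -Su0 (S_const emb hE hS (gtau d0) (fv (tau_ k) x)) /Sv inE; symmetry.
        by apply/imvP; exists x.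
      by rewrite -cardsT HT cards2 ij0.
    split=> // k; split; apply: bij_of_inj_surj.
    * exact: (proj1 (emb k)).
    * move=> u; have [i [j [ij hi hj]]] := second_img emb hE u.
      by case: (all_in_two card2 k ij) => ->; apply/imvP.
    * exact: (proj2 (emb k)).
    * move=> d; have [i [j [ij [hi [hj _]]]]] := cover2 emb d.
      by case: (all_in_two card2 k ij) => ->.
  + have [w0 _] : exists w0 : gV (VS v), true.
      by have [/card_gt0P [w _] _] := @VS_conn X v; exists w.
    have allS : forall k, k \in Sv w0.
      move=> k; have [x _] := E_nonempty k; rewrite /Sv inE; apply/imvP; exists x.
      exact: noedge_single (@VS_conn X v) hE _ _.
    have card2 : #|inc v| = 2.
      have le : #|inc v| <= 2.
        rewrite -cardsT; apply: leq_trans (hS w0); apply: subset_leq_card.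
        by apply/subsetP => k _; exact: allS.
      move: pos le h1; case: #|inc v| => [|[|[|n]]] // _ _ h.
      by exfalso; apply: hE; apply: h.
    split=> // k; split; apply: bij_of_inj_surj.
    * exact: (proj1 (emb k)).
    * move=> u; have [x _] := E_nonempty k; exists x.
      exact: noedge_single (@VS_conn X v) hE _ _.
    * exact: (proj2 (emb k)).
    * by move=> d; exfalso; apply: hE; apply/card_gt0P; exists d.
Qed.

Theorem lemma3p1 (X : two_covered) (v : gV (Gam X)) :
  0 < #|inc v| ->
  unfoldable v ->
  ~ reducible v ->
  (#|inc v| = 1 -> 0 < #|gD (VS v)|) ->
  (degenerate v /\ ~ nondegenerate v) \/ (~ degenerate v /\ nondegenerate v).
Proof.
move=> pos unf nred h1.
have excl : degenerate v -> nondegenerate v -> False.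
  by move=> [i0 [ne _]] [_ [emb _]]; exact: ne (emb i0).
case: (classic (exists i0 : inc v, ~ embedding (tau_ i0))) => [[i0 ne]|hall].
- have D : degenerate v.
    case: (unf [set i0]) => H.
      by exfalso; apply: ne; apply: (iso_emb H); rewrite inE.
    exists i0; split=> //; split.
      by move=> i ii0; apply: (iso_emb H); rewrite !inE.
    move=> i j ii0 jj0 ij [w [hi hj]].
    by apply: (iso_pair (w := w) H _ _ ij); rewrite ?inE //; apply/imvP.
  by left; split=> // N; exact: excl D N.
- have emb : forall i : inc v, embedding (tau_ i).
    by move=> i; apply: NNPP => h; apply: hall; exists i.
  have N := nondeg pos unf nred h1 emb.
  by right; split=> // D; exact: excl D N.
Qed.
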